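(* Assume $\|\hat F'(y)-\hat F'(x)\|_F\le L_{\hat F}\|y-x\|$ for all $x,y\in\mathcal F$. Let $x\in\mathcal F$, $\tau>0$, $L\ge L_{\hat F}$, and suppose $T_{L,\tau}(x)\in\mathcal F$. Then $$\frac\tau2+\frac{\hat f_2(x)}{2\tau}-\hat f_1(T_{L,\tau}(x))\ge\frac L2\|T_{L,\tau}(x)-x\|^2.$$
   Context: Let $F:\mathbb R^n\to\mathbb R^m$ be smooth, $\hat F=\frac1{\sqrt m}F$ with Jacobian $\hat F'(x)$; Euclidean norms, $\|\cdot\|_F$ Frobenius norm; $\mathcal F\subseteq\mathbb R^n$ closed convex with nonempty interior. $\hat f_1(x)=\|\hat F(x)\|$, $\hat f_2=\hat f_1^2$, $\psi_{x,L,\tau}(y)=\frac\tau2+\frac1{2\tau}\|\hat F(x)+\hat F'(x)(y-x)\|^2+\frac L2\|y-x\|^2$, and $T_{L,\tau}(x)=\arg\min_{y\in\mathbb R^n}\psi_{x,L,\tau}(y)$. *)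

(* Defs.v *)
From HB Require Import structures.
From mathcomp Require Import all_boot all_order all_algebra.
From mathcomp Require Import all_classical all_reals all_analysis.
Set Implicit Arguments. Unset Strict Implicit. Unset Printing Implicit Defensive.
Import Order.TTheory GRing.Theory Num.Theory.
Import numFieldNormedType.Exports.
Local Open Scope classical_set_scope.
Local Open Scope ring_scope.

Definition enorm (R : realType) (n : nat) (v : 'rV[R]_n) : R :=
  Num.sqrt (\sum_(i < n) v ord0 i ^+ 2).

Definition frob (R : realType) (p q : nat) (A : 'M[R]_(p, q)) : R :=
  Num.sqrt (\sum_(i < p) \sum_(j < q) A i j ^+ 2).

Definition Fhat (R : realType) (n m : nat) (F : 'rV[R]_n -> 'rV[R]_m)
  (x : 'rV[R]_n) : 'rV[R]_m := (Num.sqrt (m%:R : R))^-1 *: F x.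

(* Jacobian of G at x, as the matrix of the differential 'd G x acting on
   row vectors: 'd G x v = v *m jac G x. *)
Definition jac (R : realType) (n m : nat) (G : 'rV[R]_n -> 'rV[R]_m)
  (x : 'rV[R]_n) : 'M[R]_(n, m) := lin1_mx ('d G x).

Definition f1hat (R : realType) (n m : nat) (F : 'rV[R]_n -> 'rV[R]_m)
  (x : 'rV[R]_n) : R := enorm (Fhat F x).

Definition f2hat (R : realType) (n m : nat) (F : 'rV[R]_n -> 'rV[R]_m)
  (x : 'rV[R]_n) : R := f1hat F x ^+ 2.

Definition psi (R : realType) (n m : nat) (F : 'rV[R]_n -> 'rV[R]_m)
  (x : 'rV[R]_n) (L tau : R) (y : 'rV[R]_n) : R :=
  tau / 2 + (2 * tau)^-1 * enorm (Fhat F x + (y - x) *m jac (Fhat F) x) ^+ 2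
  + L / 2 * enorm (y - x) ^+ 2.

(* y = T_{L,tau}(x), i.e. y is the (unique) minimizer of psi_{x,L,tau} over R^n *)
Definition is_T (R : realType) (n m : nat) (F : 'rV[R]_n -> 'rV[R]_m)
  (L tau : R) (x y : 'rV[R]_n) : Prop :=
  forall z : 'rV[R]_n, psi F x L tau y <= psi F x L tau z.

(* Main.v *)
Require Import Defs.
From HB Require Import structures.
From mathcomp Require Import all_boot all_order all_algebra.
From mathcomp Require Import all_classical all_reals all_analysis.
From mathcomp Require Import ring lra.
Import Order.TTheory GRing.Theory Num.Theory.
Import numFieldNormedType.Exports.
Local Open Scope classical_set_scope.
Local Open Scope ring_scope.
Set Implicit Arguments. Unset Strict Implicit. Unset Printing Implicit Defensive.

Section Aux.
Variable R : realType.

Definition dot n (u v : 'rV[R]_n) : R := \sum_(i < n) u ord0 i * v ord0 i.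

Lemma dotC n (u v : 'rV[R]_n) : dot u v = dot v u.
Proof. by apply: eq_bigr => i _; rewrite mulrC. Qed.

Lemma dotDr n (u v w : 'rV[R]_n) : dot u (v + w) = dot u v + dot u w.
Proof. by rewrite /dot -big_split; apply: eq_bigr => i _; rewrite mxE mulrDr. Qed.

Lemma dotZr n (u v : 'rV[R]_n) a : dot u (a *: v) = a * dot u v.
Proof. by rewrite /dot mulr_sumr; apply: eq_bigr => i _; rewrite mxE mulrCA. Qed.

Lemma dotNr n (u v : 'rV[R]_n) : dot u (- v) = - dot u v.
Proof. by rewrite -scaleN1r dotZr mulN1r. Qed.

Lemma dotBr n (u v w : 'rV[R]_n) : dot u (v - w) = dot u v - dot u w.
Proof. by rewrite dotDr dotNr. Qed.

Lemma dotDl n (u v w : 'rV[R]_n) : dot (v + w) u = dot v u + dot w u.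
Proof. by rewrite dotC dotDr !(dotC u). Qed.

Lemma dotZl n (u v : 'rV[R]_n) a : dot (a *: v) u = a * dot v u.
Proof. by rewrite dotC dotZr dotC. Qed.

Lemma dotBl n (u v w : 'rV[R]_n) : dot (v - w) u = dot v u - dot w u.
Proof. by rewrite dotC dotBr !(dotC u). Qed.

Lemma dot0r n (u : 'rV[R]_n) : dot u 0 = 0.
Proof. by rewrite /dot big1 // => i _; rewrite mxE mulr0. Qed.

Lemma dot_ge0 n (u : 'rV[R]_n) : 0 <= dot u u.
Proof. by apply: sumr_ge0 => i _; rewrite -expr2 sqr_ge0. Qed.

Lemma enorm_ge0 n (u : 'rV[R]_n) : 0 <= enorm u.
Proof. exact: sqrtr_ge0. Qed.

Lemma enorm_sq n (u : 'rV[R]_n) : enorm u ^+ 2 = dot u u.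
Proof.
rewrite /enorm sqr_sqrtr; last by apply: sumr_ge0 => i _; rewrite sqr_ge0.
by apply: eq_bigr => i _; rewrite expr2.
Qed.

Lemma enorm0 n : enorm (0 : 'rV[R]_n) = 0.
Proof.
have := enorm_sq (0 : 'rV[R]_n); rewrite dot0r => /eqP.
by rewrite sqrf_eq0 => /eqP.
Qed.

Lemma discr (a b c : R) : (forall s, 0 <= a * s ^+ 2 - 2 * b * s + c) -> b ^+ 2 <= a * c.
Proof.
move=> H.
have a0 : 0 <= a.
  have := H 1; have := H (-1); have := H 0.
  case: (lerP 0 a) => // an.
  set s := (`|c| + 1) / (- a) + 1.
  have ha : ((`|c| + 1) / (- a)) * (- a) = `|c| + 1 by rewrite divfK // oppr_eq0 lt_eqF.
  have hs : 0 <= (`|c| + 1) / (- a) by rewrite divr_ge0 // ?oppr_ge0 ?ltW // addr_ge0.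
  have h1 := H s; have h2 := H (- s).
  have hc := ler_norm c; have hc' := normr_ge0 c.
  have hs1 : 1 <= s by rewrite /s lerDr.
  have : a * s ^+ 2 <= a * s by rewrite ler_nM2l // expr2 ler_peMl // (le_trans ler01).
  move=> hle; move: h1 h2 hle; rewrite /s; nra.
have [a0'|] := eqVneq a 0.
  case: (eqVneq b 0) => [-> |bn0]; first by rewrite a0' mul0r expr0n.
  exfalso.
  set s := (c + 1) / (2 * b).
  have hs : 2 * b * s = c + 1 by rewrite /s mulrC divfK // mulf_neq0 // pnatr_eq0.
  have := H s; rewrite a0' mul0r; lra.
move=> an0; have ap : 0 < a by rewrite lt_def a0 andbT an0.
set s := b / a.
have hs : a * s = b by rewrite /s mulrC divfK // gt_eqF.
have := H s; rewrite expr2 => h.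
have h2 : a * s * s = b * s by rewrite hs.
have h3 : 0 <= c - b * s by lra.
have : 0 <= a * (c - b * s) by rewrite mulr_ge0 // ltW.
rewrite mulrBr mulrCA hs expr2; lra.
Qed.

Lemma sq_le (x y : R) : 0 <= y -> x ^+ 2 <= y ^+ 2 -> x <= y.
Proof. rewrite !expr2 => *; nra. Qed.

Lemma sq_eq (x y : R) : 0 <= x -> 0 <= y -> x ^+ 2 = y ^+ 2 -> x = y.
Proof.
move=> hx hy h; apply/le_anti/andP; split; apply: sq_le => //; by rewrite h.
Qed.

Lemma dot_sq_le n (u v : 'rV[R]_n) : dot u v ^+ 2 <= dot u u * dot v v.
Proof.
apply: discr => s.
have := dot_ge0 (s *: u - v).
rewrite dotBl !dotBr !dotZl !dotZr (dotC v u) expr2; lra.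
Qed.

Lemma CS n (u v : 'rV[R]_n) : dot u v <= enorm u * enorm v.
Proof.
have := dot_sq_le u v; rewrite -!enorm_sq -exprMn.
have := mulr_ge0 (enorm_ge0 u) (enorm_ge0 v).
move: (enorm u * enorm v) => p; move: (dot u v) => d; rewrite !expr2; nra.
Qed.

Lemma enormZ n a (v : 'rV[R]_n) : enorm (a *: v) = `|a| * enorm v.
Proof.
have h : enorm (a *: v) ^+ 2 = (`|a| * enorm v) ^+ 2.
  by rewrite exprMn real_normK ?num_real // !enorm_sq dotZl dotZr mulrA expr2.
by apply: sq_eq => //; rewrite ?enorm_ge0 ?mulr_ge0 ?enorm_ge0.
Qed.

Lemma enormD n (u v : 'rV[R]_n) : enorm (u + v) <= enorm u + enorm v.
Proof.
have h : enorm (u + v) ^+ 2 <= (enorm u + enorm v) ^+ 2.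
  rewrite enorm_sq dotDl !dotDr sqrrD !enorm_sq (dotC v u).
  have := CS u v; lra.
by apply: sq_le h; rewrite addr_ge0 ?enorm_ge0.
Qed.

Lemma enormN n (u : 'rV[R]_n) : enorm (- u) = enorm u.
Proof. by rewrite -scaleN1r enormZ normrN1 mul1r. Qed.

Lemma frob_ge0 p q (M : 'M[R]_(p, q)) : 0 <= frob M.
Proof. exact: sqrtr_ge0. Qed.

Lemma enorm_mul n k (v : 'rV[R]_n) (M : 'M[R]_(n, k)) :
  enorm (v *m M) <= enorm v * frob M.
Proof.
have hf : frob M ^+ 2 = \sum_(j < k) dot (\row_i M i j) (\row_i M i j).
  rewrite /frob sqr_sqrtr; last by do 2 (apply: sumr_ge0 => ? _); rewrite sqr_ge0.
  rewrite exchange_big; apply: eq_bigr => j _; apply: eq_bigr => i _.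
  by rewrite !mxE expr2.
have h : enorm (v *m M) ^+ 2 <= (enorm v * frob M) ^+ 2.
  rewrite exprMn hf enorm_sq enorm_sq mulr_sumr /dot.
  apply: ler_sum => j _.
  have := dot_sq_le v (\row_i M i j).
  have -> : dot v (\row_i M i j) = \sum_i0 v ord0 i0 * M i0 j.
    by apply: eq_bigr => i _; rewrite mxE.
  by rewrite expr2 mxE.
by apply: sq_le h; rewrite mulr_ge0 ?enorm_ge0 ?frob_ge0.
Qed.
Lemma is_derive_dot n m (G : 'rV[R]_n -> 'rV[R]_m) (r : 'rV[R]_m) p w :
  differentiable G p ->
  is_derive p w (fun q => dot r (G q)) (dot r (w *m jac G p)).
Proof.
move=> dG.
have hc i : is_derive p w (fun q => G q ord0 i) ((w *m jac G p) ord0 i).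
  have dv : derivable G p w by exact: diff_derivable.
  apply: DeriveDef; first by move/derivable_mxP: dv; apply.
  have := derive_mx dv; rewrite deriveE // /jac mul_rV_lin1 => ->.
  by rewrite mxE.
have -> : (fun q => dot r (G q)) = \sum_(i < m) (r ord0 i \*: (fun q => G q ord0 i)).
  by apply: funext => q; rewrite fct_sumE /dot; apply: eq_bigr.
rewrite /dot.
apply: is_derive_sum => i; exact: is_deriveZ.
Qed.

Lemma is_derive_line n (S : 'rV[R]_n -> R) x w s (D : R) :
  is_derive (x + s *: w) w S D ->
  is_derive s 1 (fun t => S (x + t *: w)) D.
Proof.
case=> dv dval.
have E : (fun h : R => h^-1 *: (((fun t => S (x + t *: w)) \o shift s) (h *: 1) - S (x + s *: w)))
  = (fun h : R => h^-1 *: ((S \o shift (x + s *: w)) (h *: w) - S (x + s *: w))).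
  apply: funext => h /=; congr (_ *: (S _ - _)).
  by rewrite /shift /= -[h *: 1]/(h * 1) mulr1 scalerDl addrCA addrA.
apply: DeriveDef; first by rewrite /derivable E.
by rewrite /derive E.
Qed.
Lemma is_derive_quad (c0 K t : R) :
  is_derive t 1 (fun s : R => s * c0 + K / 2 * (s * s)) (c0 + K * t).
Proof.
have h1 : is_derive t 1 (id : R -> R) 1 := is_derive_id t 1.
have hc := is_derive_cst c0 t (1:R).
have hk := is_derive_cst (K / 2) t (1:R).
have h := is_deriveD (is_deriveM h1 hc) (is_deriveM hk (is_deriveM h1 h1)).
have -> : (fun s : R => s * c0 + K / 2 * (s * s)) = ((id : R -> R) * cst c0 + cst (K / 2) * ((id : R -> R) * id)) by [].
apply: (is_derive_eq h).
rewrite /= /cst !scaler0 !addr0 add0r -[t%:A]/(t * 1) -[c0%:A]/(c0 * 1) -[_ *: _]/(_ * _). lra.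
Qed.

Lemma taylor n m (G : 'rV[R]_n -> 'rV[R]_m) (dom : set 'rV[R]_n) LF x y :
  (forall z, differentiable G z) ->
  convex_set (dom : set (convex_lmodType 'rV[R]_n)) -> dom x -> dom y ->
  (forall p q, dom p -> dom q -> frob (jac G q - jac G p) <= LF * enorm (q - p)) ->
  dot (G y - G x - (y - x) *m jac G x) (G y - G x - (y - x) *m jac G x)
    <= enorm (G y - G x - (y - x) *m jac G x) * LF * enorm (y - x) ^+ 2 / 2.
Proof.
move=> dG cvx dx dy Lip.
set r := G y - G x - _.
set w := y - x. set J0 := jac G x. set K := enorm r * LF * enorm w ^+ 2.
set c0 := dot r (w *m J0).
pose psi : R -> R := (fun t : R => dot r (G (x + t *: w))) - (fun t : R => t * c0 + K / 2 * (t * t)).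
have hd (t : R) : is_derive t 1 psi (dot r (w *m jac G (x + t *: w)) - (c0 + K * t)).
  apply: is_deriveB.
  - exact: (is_derive_line (is_derive_dot r w (dG _))).
  - exact: is_derive_quad.
have cont : {within `[0, 1], continuous psi}.
  by apply: derivable_within_continuous => t _; case: (hd t).
have [c c01 hc] := MVT ltr01 (fun t _ => hd t) cont.
move: c01; rewrite in_itv /= => /andP[c0p c1].
have dp : dom (x + c *: w).
  have := cvx y x (Itv01 (ltW c0p) (ltW c1)) (mem_set dy) (mem_set dx).
  rewrite inE /= => h.
  have -> : x + c *: w = c *: y + (1 - c) *: x.
    by rewrite /w scalerBr scalerBl scale1r addrCA addrA.
  exact: h.
have hD : dot r (w *m jac G (x + c *: w)) - (c0 + K * c) <= 0.
  rewrite /c0 opprD addrA -dotBr -mulmxBr.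
  have h1 := CS r (w *m (jac G (x + c *: w) - J0)).
  have h2 := enorm_mul w (jac G (x + c *: w) - J0).
  have h3 := Lip _ _ dx dp.
  rewrite (_ : x + c *: w - x = c *: w) in h3; last by rewrite addrC addKr.
  rewrite enormZ ger0_norm in h3; last exact: ltW.
  rewrite -/J0 in h3.
  rewrite subr_le0 (le_trans h1) // (le_trans (ler_wpM2l (enorm_ge0 r) h2)) //.
  rewrite mulrA (le_trans (ler_wpM2l (mulr_ge0 (enorm_ge0 r) (enorm_ge0 w)) h3)) //.
  by rewrite /K expr2 le_eqVlt; apply/orP; left; apply/eqP; lra.
have E1 : x + 1 *: w = y by rewrite scale1r /w addrC subrK.
have E0 : x + 0 *: w = x by rewrite scale0r addr0.
move: hc; rewrite /psi !fctE E1 E0 => hc.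
have -> : dot r r = dot r (G y) - dot r (G x) - c0 by rewrite {1}/r !dotBr.
move: hc hD; rewrite subr0 mulr1; lra.
Qed.

Lemma delta0 (d g : R) : (forall e, 0 <= e * d + g * e ^+ 2) -> d = 0.
Proof.
move=> H; have hd : 0 <= d ^+ 2 by rewrite sqr_ge0.
case: (lerP g 0) => hg.
  have := H (- d); rewrite !expr2 => h.
  apply/eqP; rewrite -sqrf_eq0 eq_le hd andbT expr2; nra.
have := H (- d / (2 * g)).
set e := - d / (2 * g).
have he : e * (2 * g) = - d by rewrite /e divfK // mulf_neq0 // gt_eqF.
rewrite !expr2 => h.
have : 0 <= (e * d + g * (e * e)) * (4 * g) by rewrite mulr_ge0 // ?mulr_ge0 // ltW.
have h2 : (e * d + g * (e * e)) * (4 * g) = - d * d.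
  have -> : (e * d + g * (e * e)) * (4 * g) = 2 * (e * (2 * g)) * d + (e * (2 * g)) * (e * (2 * g)) by ring.
  by rewrite he; ring.
rewrite h2 => h3.
apply/eqP; rewrite -sqrf_eq0 eq_le hd andbT expr2; lra.
Qed.

Lemma qmin (k A B C L D : R) : 0 <= k -> 0 <= C ->
  (forall s, k * (A + 2 * B + C) + L / 2 * D <= k * (A + 2 * s * B + s ^+ 2 * C) + L / 2 * (s ^+ 2 * D)) ->
  k * (A + 2 * B + C) + L / 2 * D + L / 2 * D <= k * A.
Proof.
move=> hk hC H.
have hd : 2 * k * B + 2 * (k * C + L / 2 * D) = 0.
  apply: (@delta0 _ (k * C + L / 2 * D)) => e.
  have := H (1 + e); rewrite !expr2; nra.
have : 0 <= k * C by rewrite mulr_ge0.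
nra.
Qed.


Lemma psi_line n m (F : 'rV[R]_n -> 'rV[R]_m) x L tau w s :
  psi F x L tau (x + s *: w) =
  tau / 2 + (2 * tau)^-1 * (dot (Fhat F x) (Fhat F x)
     + 2 * s * dot (Fhat F x) (w *m jac (Fhat F) x)
     + s ^+ 2 * dot (w *m jac (Fhat F) x) (w *m jac (Fhat F) x))
  + L / 2 * (s ^+ 2 * dot w w).
Proof.
rewrite /psi (addrC x) addrK -scalemxAl !enorm_sq.
move: (Fhat F x) (jac (Fhat F) x) => a J.
rewrite !dotDl !dotDr !dotZl !dotZr (dotC (_ *m _) a) !expr2.
congr (_ + _ * _ + _ * _); ring.
Qed.

End Aux.
Unset Implicit Arguments.

Theorem lemma2 (R : realType) (n m : nat) (F : 'rV[R]_n -> 'rV[R]_m)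
  (dom : set 'rV[R]_n) (LF : R) :
  (forall x : 'rV[R]_n, differentiable F x) ->
  closed dom -> convex_set (dom : set (convex_lmodType 'rV[R]_n)) ->
  dom° !=set0 ->
  (forall x y, dom x -> dom y ->
     frob (jac (Fhat F) y - jac (Fhat F) x) <= LF * enorm (y - x)) ->
  forall (x : 'rV[R]_n) (tau L : R) (Tx : 'rV[R]_n),
  dom x -> 0 < tau -> LF <= L ->
  is_T F L tau x Tx -> dom Tx ->
  tau / 2 + f2hat F x / (2 * tau) - f1hat F Tx >= L / 2 * enorm (Tx - x) ^+ 2.
Proof.
move=> dF _ cvx _ Lip x tau L Tx dx tau0 LFL hT dT.
have dG : forall z, differentiable (Fhat F) z.
  move=> z; exact: differentiableZ.
have hTay := taylor dG cvx dx dT Lip.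
set G := Fhat F in hTay *.
set w := Tx - x in hTay *.
set r := G Tx - G x - w *m jac G x in hTay *.
set a := G x. set v := w *m jac G x.
have ETx : Tx = x + 1 *: w by rewrite scale1r /w addrC subrK.
have hmin s := hT (x + s *: w).
move: hmin; rewrite {1}ETx => hmin.
have hq := @qmin R ((2 * tau)^-1) (dot a a) (dot a v) (dot v v) L (dot w w).
have hk : 0 <= (2 * tau)^-1 by rewrite invr_ge0 mulr_ge0 // ltW.
have := hq hk (dot_ge0 v).
have H1 : forall s, (2 * tau)^-1 * (dot a a + 2 * dot a v + dot v v) + L / 2 * dot w w <=
     (2 * tau)^-1 * (dot a a + 2 * s * dot a v + s ^+ 2 * dot v v) + L / 2 * (s ^+ 2 * dot w w).
  move=> s; have := hmin s; rewrite !psi_line expr1n !mul1r mulr1 -/G -/a -/v.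
  lra.
move=> /(_ H1) {hq} Hq.
have hLw : 0 <= LF * enorm w.
  exact: le_trans (frob_ge0 _) (Lip _ _ dx dT).
have hw := enorm_ge0 w.
have he := enorm_ge0 r.
have hlin := enorm_ge0 (a + v).
have hD : dot w w = enorm w ^+ 2 by rewrite enorm_sq.
have hlin2 : enorm (a + v) ^+ 2 = dot a a + 2 * dot a v + dot v v.
  by rewrite enorm_sq dotDl !dotDr (dotC v a); ring.
rewrite -enorm_sq in hTay.
have he2 : enorm r <= LF * enorm w ^+ 2 / 2.
  have hX : 0 <= LF * enorm w ^+ 2 / 2 by rewrite expr2 mulrA divr_ge0 // mulr_ge0.
  have E : enorm r * LF * enorm w ^+ 2 / 2 = enorm r * (LF * enorm w ^+ 2 / 2) by ring.
  rewrite E in hTay; move: hTay hX he; move: (LF * enorm w ^+ 2 / 2) (enorm r) => X e.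
  rewrite expr2; nra.
have hf1 : f1hat F Tx <= enorm (a + v) + enorm r.
  rewrite /f1hat -/G addrC.
  have -> : G Tx = r + (a + v) by rewrite /r -/a -/v -[G Tx - a - v]addrA -opprD subrK.
  exact: enormD.
have hf2 : f2hat F x = dot a a by rewrite /f2hat /f1hat -/G -/a enorm_sq.
rewrite hf2.
have hkt : (2 * tau)^-1 * (2 * tau) = 1 by rewrite mulVf // mulf_neq0 // gt_eqF.
have hsq : 0 <= (2 * tau)^-1 * (tau - enorm (a + v)) ^+ 2 by rewrite mulr_ge0 // sqr_ge0.
move: Hq hsq hkt; rewrite -hlin2 hD; move: (2 * tau)^-1 => k.
rewrite /= !expr2 => Hq hsq hkt.
have hL : LF * (enorm w * enorm w) <= L * (enorm w * enorm w) by rewrite ler_wpM2r // mulr_ge0.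
clear H1 hmin hk.
have hkt1 : k * tau * tau = tau / 2.
  have -> : k * tau * tau = (k * (2 * tau)) * tau / 2 by field.
  by rewrite hkt mul1r.
have hkt2 : k * tau * enorm (a + v) = enorm (a + v) / 2.
  have -> : k * tau * enorm (a + v) = (k * (2 * tau)) * enorm (a + v) / 2 by field.
  by rewrite hkt mul1r.
move: he2; rewrite expr2 => he2.
have E : k * ((tau - enorm (a + v)) * (tau - enorm (a + v))) =
  k * tau * tau - 2 * (k * tau * enorm (a + v)) + k * (enorm (a + v) * enorm (a + v)) by ring.
rewrite E hkt1 hkt2 in hsq.
lra.
Qed.
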